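(* Every tree in $\mathcal{O}'$ belongs to $\mathcal{O}$, and $\mathcal{O}'\neq\mathcal{O}$; in fact the path $P_{10}$ belongs to $\mathcal{O}$ but not to $\mathcal{O}'$.
   Context: Family $\mathcal{O}$ (labeled trees, each vertex has status $A$ or $B$): it contains the path $P_6$ whose two central vertices have status $A$ and other four vertices status $B$; and it is closed under: Operation $\mathcal{O}_1$: for a path $xyz$ with $x,y$ of status $B$ and $z$ of status $A$, add a new path $abc$ and edge $za$ with statuses $a\colon A$, $b\colon B$, $c\colon B$; Operation $\mathcal{O}_2$: for an edge $xy$ with $x,y$ of status $B$, add a new path $abcd$ and edge $dx$ with statuses $a\colon B$, $b\colon B$, $c\colon A$, $d\colon A$. An unlabeled tree is in $\mathcal{O}$ if it is the underlying tree of a labeled tree in $\mathcal{O}$. $2$-subdivision: let $G$ be a connected graph of order at least $2$ and $\mathcal{P}=\{\mathcal{P}(v):v\in V(G)\}$ where $\mathcal{P}(v)$ is a partition of $N_G(v)$ (into nonempty blocks). $G(\mathcal{P})$ has vertex set $V(G)\cup(V(G)\times\{1\})\cup\bigcup_{v\in V(G)}(\{v\}\times\mathcal{P}(v))$ and edge set $E_1\cup E_2\cup E_3$, where $E_1=\{v(v,1):v\in V(G)\}$, $E_2=\{v(v,A): v\in V(G), A\in\mathcal{P}(v)\}$, and $E_3=\{(u,A)(v,B): uv\in E(G), A\in\mathcal{P}(u), B\in\mathcal{P}(v), v\in A, u\in B\}$. (Intuitively: subdivide each inner edge of the corona $G\circ K_1$ twice, then for each $v$ and each block $A\in\mathcal{P}(v)$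 merge the new vertices adjacent to $v$ on the edges $vw$, $w\in A$, into one vertex.) $\mathcal{O}'$ is the family of all trees $T(\mathcal{P})$ where $T$ is a tree of order at least $2$ and $\mathcal{P}$ is such a family of partitions. *)

(* Defs.v *)
From HB Require Import structures.
From mathcomp Require Import all_boot.
Set Implicit Arguments. Unset Strict Implicit. Unset Printing Implicit Defensive.

Definition acyclic (T : finType) (e : rel T) : Prop :=
  forall c : seq T, uniq c -> 3 <= size c -> ~~ cycle e c.

Definition is_tree (T : finType) (e : rel T) : Prop :=
  symmetric e /\ irreflexive e /\ (forall x y : T, connect e x y) /\ acyclic e.

Definition graph_iso (T1 T2 : finType) (e1 : rel T1) (e2 : rel T2) : Prop :=
  exists f : T1 -> T2, bijective f /\ forall x y, e2 (f x) (f y) = e1 x y.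

Definition path_adj (n : nat) : rel 'I_n :=
  fun i j => (i.+1 == j :> nat) || (j.+1 == i :> nat).

(** * Labeled trees and the family O.  Status A is [true], status B is [false]. *)
Record lgraph := LGraph { lv : finType; ladj : rel lv; lstat : lv -> bool }.

Definition P6L : lgraph :=
  @LGraph 'I_6 (@path_adj 6) (fun i => (i == 2 :> nat) || (i == 3 :> nat)).

(** Operation O1 at z: new vertices inr 0 = a, inr 1 = b, inr 2 = c;
    path abc and edge za; statuses a:A, b:B, c:B. *)
Definition op1_adj (G : lgraph) (z : lv G) : rel (lv G + 'I_3)%type :=
  fun p q => match p, q with
  | inl u, inl v => @ladj G u v
  | inl u, inr j => (u == z) && (j == 0 :> nat)
  | inr j, inl u => (u == z) && (j == 0 :> nat)
  | inr i, inr j => @path_adj 3 i j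
  end.
Definition op1_stat (G : lgraph) : (lv G + 'I_3)%type -> bool :=
  fun p => match p with inl u => @lstat G u | inr j => (j == 0 :> nat) end.
Definition op1 (G : lgraph) (z : lv G) : lgraph :=
  @LGraph (lv G + 'I_3)%type (@op1_adj G z) (@op1_stat G).

(** Operation O2 at x: new vertices inr 0 = a, inr 1 = b, inr 2 = c,
    inr 3 = d; path abcd and edge dx; statuses a:B, b:B, c:A, d:A. *)
Definition op2_adj (G : lgraph) (x : lv G) : rel (lv G + 'I_4)%type :=
  fun p q => match p, q with
  | inl u, inl v => @ladj G u v
  | inl u, inr j => (u == x) && (j == 3 :> nat)
  | inr j, inl u => (u == x) && (j == 3 :> nat)
  | inr i, inr j => @path_adj 4 i j
  end.
Definition op2_stat (G : lgraph) : (lv G + 'I_4)%type -> bool :=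
  fun p => match p with inl u => @lstat G u | inr j => (2 <= j) end.
Definition op2 (G : lgraph) (x : lv G) : lgraph :=
  @LGraph (lv G + 'I_4)%type (@op2_adj G x) (@op2_stat G).

Inductive inO : lgraph -> Prop :=
| inO_P6 : inO P6L
| inO_op1 (G : lgraph) (x y z : lv G) :
    inO G -> @ladj G x y -> @ladj G y z ->
    ~~ @lstat G x -> ~~ @lstat G y -> @lstat G z -> inO (@op1 G z)
| inO_op2 (G : lgraph) (x y : lv G) :
    inO G -> @ladj G x y -> ~~ @lstat G x -> ~~ @lstat G y -> inO (@op2 G x).

Definition in_O (T : finType) (e : rel T) : Prop :=
  exists G : lgraph, inO G /\ graph_iso (@ladj G) e.

Definition nbhd (V : finType) (e : rel V) (v : V) : {set V} := [set w | e v w].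

(** Vertices of G(P): inl (inl v) = v, inl (inr v) = (v,1),
    inr ((v,A)) = (v,A) with A a block of P v. *)
Definition sub2_vert (V : finType) (P : V -> {set {set V}}) : finType :=
  ((V + V) + {p : V * {set V} | p.2 \in P p.1})%type.

Definition sub2_adj (V : finType) (e : rel V) (P : V -> {set {set V}}) :
  rel (sub2_vert P) :=
  fun p q => match p, q with
  | inl (inl v), inl (inr w) => v == w
  | inl (inr w), inl (inl v) => v == w
  | inl (inl v), inr b => v == (val b).1
  | inr b, inl (inl v) => v == (val b).1
  | inr a, inr b =>
      e (val a).1 (val b).1 && ((val b).1 \in (val a).2)
                            && ((val a).1 \in (val b).2)
  | _, _ => false
  end.

Definition in_O' (H : finType) (eH : rel H) : Prop :=
  exists (V : finType) (e : rel V) (P : V -> {set {set V}}),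
    [/\ is_tree e, 2 <= #|V|,
        (forall v, partition (P v) (nbhd e v)) &
        graph_iso (@sub2_adj V e P) eH].

(* Main.v *)
Require Import Defs.
From mathcomp Require Import all_boot zify.
From Stdlib Require Import Lia.
Set Implicit Arguments. Unset Strict Implicit. Unset Printing Implicit Defensive.

Definition liso (G H : lgraph) : Prop :=
  exists f : lv G -> lv H, [/\ bijective f,
    (forall x y, ladj (f x) (f y) = ladj x y) & (forall x, lstat (f x) = lstat x)].

Lemma liso_trans G H K : liso G H -> liso H K -> liso G K.
Proof.
move=> [f [fb fa fs]] [g [gb ga gs]]; exists (g \o f); split.
- exact: bij_comp.
- by move=> x y /=; rewrite ga; exact: fa.
- by move=> x /=; rewrite gs fs.
Qed.

Definition summap (A B C : Type) (f : A -> B) (p : (A + C)%type) : (B + C)%type :=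
  match p with inl a => inl (f a) | inr c => inr c end.

Lemma summap_bij (A B C : Type) (f : A -> B) : bijective f -> bijective (@summap A B C f).
Proof.
move=> [g fK gK]; exists (summap g) => [[a|c]|[b|c]] //=; by rewrite ?fK ?gK.
Qed.

Lemma liso_op1 G H z : forall f : lv G -> lv H,
  [/\ bijective f, (forall x y, ladj (f x) (f y) = ladj x y) & (forall x, lstat (f x) = lstat x)] ->
  liso (op1 z) (op1 (f z)).
Proof.
move=> f [fb fa fs]; exists (summap f); split.
- exact: summap_bij.
- have fi : injective f by case: fb => g /can_inj.
  by move=> [a|c] [b|d] //=; rewrite ?fa ?(inj_eq fi).
- by move=> [a|c] //=.
Qed.

Lemma liso_op2 G H z : forall f : lv G -> lv H,
  [/\ bijective f, (forall x y, ladj (f x) (f y) = ladj x y) & (forall x, lstat (f x) = lstat x)] ->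
  liso (op2 z) (op2 (f z)).
Proof.
move=> f [fb fa fs]; exists (summap f); split.
- exact: summap_bij.
- have fi : injective f by case: fb => g /can_inj.
  by move=> [a|c] [b|d] //=; rewrite ?fa ?(inj_eq fi).
- by move=> [a|c] //=.
Qed.

Lemma bij_inj_surj (T1 T2 : finType) (f : T1 -> T2) :
  injective f -> (forall y, exists x, f x = y) -> bijective f.
Proof.
move=> fi fs; apply: inj_card_bij => //.
have : #|[set: T2]| <= #|f @: [set: T1]|.
  apply: subset_leq_card; apply/subsetP => y _; have [x <-] := fs y.
  exact: imset_f.
by rewrite cardsT card_imset // cardsT.
Qed.

Lemma part1 (T : finType) (Q : {set {set T}}) (a : T) :
  partition Q [set a] -> Q = [set [set a]].
Proof.
move=> hQ; have := hQ; case/and3P => /eqP cov triv s0.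
have H : forall B, B \in Q -> B = [set a].
  move=> B hB; have := partitionS hQ hB; rewrite subset1 => /orP [/eqP //|/eqP B0].
  by move: s0; rewrite -B0 hB.
apply/setP => B; rewrite in_set1; apply/idP/eqP => [/H //|->].
have : a \in cover Q by rewrite cov set11.
by case/bigcupP => C hC _; rewrite -(H C hC).
Qed.

Lemma sub2_adj_sym (V : finType) (e : rel V) (P : V -> {set {set V}}) :
  symmetric e -> symmetric (sub2_adj e (P:=P)).
Proof.
move=> esy [[x|x]|a] [[y|y]|b] //=; rewrite ?(eq_sym x) //.
by rewrite esy -!andbA; congr andb; rewrite andbC.
Qed.

Definition s2stat (V : finType) (P : V -> {set {set V}}) (p : sub2_vert P) : bool :=
  if p is inr _ then true else false.
Definition S2 (V : finType) (e : rel V) (P : V -> {set {set V}}) : lgraph :=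
  @LGraph (sub2_vert P) (sub2_adj e (P:=P)) (@s2stat V P).

Section Step.
Variables (V : finType) (e : rel V) (P : V -> {set {set V}}) (w v : V).
Hypotheses (esy : symmetric e) (eirr : irreflexive e)
  (Ppart : forall x, partition (P x) (nbhd e x)) (wleaf : forall y, e w y = (y == v)).

Local Notation Vw := {x : V | x != w}.

Definition ew : rel Vw := fun x y => e (val x) (val y).
Definition preim (A : {set V}) : {set Vw} := [set y : Vw | val y \in A].
Definition Pw (x : Vw) : {set {set Vw}} := [set preim A | A in P (val x) & A != [set w]].

Lemma vw : v != w.
Proof. by apply/eqP => h; have := wleaf v; rewrite -h eirr eqxx. Qed.

Lemma Pw_w : P w = [set [set v]].
Proof.
apply: part1; have -> : [set v] = nbhd e w by apply/setP => y; rewrite !inE wleaf.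
exact: Ppart.
Qed.

Lemma triv x : trivIset (P x).
Proof. by case/and3P: (Ppart x). Qed.

Lemma blk_ne x A : A \in P x -> exists a, a \in A.
Proof.
move=> hA; case/and3P: (Ppart x) => _ _ s0.
case: (set_0Vmem A) => [A0|[a aA]]; last by exists a.
by move: s0; rewrite -A0 hA.
Qed.

Lemma blk_nbhd x A a : A \in P x -> a \in A -> e x a.
Proof.
move=> hA aA; have := partitionS (Ppart x) hA => /subsetP /(_ a aA).
by rewrite inE.
Qed.

Lemma nonw x A : A \in P x -> A != [set w] -> exists a, (a \in A) && (a != w).
Proof.
move=> hA hw; have [a aA] := blk_ne hA.
case: (boolP [exists b, (b \in A) && (b != w)]) => [/existsP [b hb]|]; first by exists b.
rewrite negb_exists => /forallP hall; exfalso; move/negP: hw; apply.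
apply/eqP/setP => b; rewrite inE; apply/idP/eqP => [bA|->].
  by have := hall b; rewrite bA /= negbK => /eqP.
have := hall a; rewrite aA /= negbK => /eqP <-; exact: aA.
Qed.

Lemma memPw x A' : reflect (exists2 A, A \in P (val x) & (A != [set w]) /\ A' = preim A) (A' \in Pw x).
Proof.
apply: (iffP imsetP) => [[A] | [A hA [hw ->]]].
  by rewrite inE => /andP [hA hw] ->; exists A.
by exists A => //; rewrite inE hA hw.
Qed.

Lemma preim_inj x A B : A \in P x -> B \in P x -> A != [set w] -> preim A = preim B -> A = B.
Proof.
move=> hA hB hw eAB; have [a /andP [aA aw]] := nonw hA hw.
have : (Sub a aw : Vw) \in preim A by rewrite inE.
rewrite eAB inE /= => aB.
by rewrite -(def_pblock (triv x) hA aA) (def_pblock (triv x) hB aB).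
Qed.

Definition lift (x : Vw) (A' : {set Vw}) : {set V} :=
  pblock (P (val x)) (val (odflt x [pick y in A'])).

Lemma liftK x A : A \in P (val x) -> A != [set w] -> lift x (preim A) = A.
Proof.
move=> hA hw; rewrite /lift; case: pickP => [y|] /=.
  by rewrite inE => yA; apply: def_pblock (triv _) hA yA.
have [a /andP [aA aw]] := nonw hA hw.
by move=> /(_ (Sub a aw)); rewrite inE /= aA.
Qed.

Lemma lift_in x A' : A' \in Pw x -> lift x A' \in P (val x).
Proof. by case/memPw => A hA [hw ->]; rewrite liftK. Qed.

Lemma lift_pre x A' : A' \in Pw x -> preim (lift x A') = A'.
Proof. by case/memPw => A hA [hw ->]; rewrite liftK. Qed.

Lemma lift_nw x A' : A' \in Pw x -> lift x A' != [set w].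
Proof. by case/memPw => A hA [hw ->]; rewrite liftK. Qed.

Lemma mem_lift x A' (y : Vw) : A' \in Pw x -> (val y \in lift x A') = (y \in A').
Proof. by move=> h; rewrite -{2}(lift_pre h) inE. Qed.

Lemma Pw_part x : partition (Pw x) (nbhd ew x).
Proof.
apply/and3P; split.
- apply/eqP/setP => y; rewrite inE /ew; apply/bigcupP/idP => [[A' /memPw [A hA [_ ->]]]|].
    by rewrite inE; apply: blk_nbhd hA.
  move=> exy.
  have : val y \in cover (P (val x)) by case/and3P: (Ppart (val x)) => /eqP -> _ _; rewrite inE.
  case/bigcupP => A hA yA; exists (preim A); last by rewrite inE.
  apply/memPw; exists A => //; split => //.
  by apply: contraTneq yA => ->; rewrite inE (valP y).
- apply/trivIsetP => A' B' /memPw [A hA [hwA ->]] /memPw [B hB [hwB ->]] nAB.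
  have nAB' : A != B by apply: contraNneq nAB => ->.
  move/trivIsetP: (triv (val x)) => /(_ A B hA hB nAB').
  rewrite !disjoint_subset => /subsetP dAB; apply/subsetP => y; rewrite !inE => yA.
  by have := dAB _ yA; rewrite inE.
- apply/negP => /memPw [A hA [hw h0]].
  have [a /andP [aA aw]] := nonw hA hw.
  have : (Sub a aw : Vw) \in preim A by rewrite inE.
  by rewrite -h0 inE.
Qed.


Lemma ew_tree : is_tree e -> is_tree ew.
Proof.
move=> [_ [_ [econn eac]]]; split; [|split; [|split]].
- by move=> x y; rewrite /ew esy.
- by move=> x; rewrite /ew eirr.
- pose vv : Vw := Sub v vw.
  have symc : connect_sym ew by apply: sym_connect_sym => x y; rewrite /ew esy.
  suff H : forall x : Vw, connect ew x vv.
    by move=> x y; apply: connect_trans (H x) _; rewrite symc; exact: H.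
  pose C := [pred x : V | [forall x' : Vw, (val x' == x) ==> connect ew x' vv]].
  have clC : closed e C.
    apply: intro_closed; first exact: sym_connect_sym.
    move=> x y exy /forallP hx; apply/forallP => y'; apply/implyP => /eqP hy.
    case: (x =P w) => [xw|/eqP xw].
      have -> : y' = vv by apply: val_inj; rewrite /= hy; apply/eqP; rewrite -wleaf -xw.
      exact: connect0.
    have := hx (Sub x xw); rewrite eqxx /= => hc.
    apply: connect_trans hc; apply: connect1; by rewrite /ew hy /= esy.
  have vC : v \in C.
    apply/forallP => x'; apply/implyP => /eqP h.
    have -> : x' = vv by apply: val_inj.
    exact: connect0.
  move=> x; have := closed_connect clC (econn v (val x)); rewrite vC => /esym /forallP /(_ x).
  by rewrite eqxx.
- move=> c uc sc; have := eac (map val c).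
  by rewrite (map_inj_uniq val_inj) size_map cycle_map => /(_ uc sc).
Qed.

Lemma card_Vw : #|{: Vw}| = #|V|.-1.
Proof. by rewrite card_sig -(cardC1 w); apply: eq_card => x; rewrite !inE. Qed.

Local Notation SP := {p : V * {set V} | p.2 \in P p.1}.

Definition e0 (p : sub2_vert Pw) : sub2_vert P :=
  match p with
  | inl (inl x) => inl (inl (val x))
  | inl (inr x) => inl (inr (val x))
  | inr b => inr (exist (fun p : V * {set V} => p.2 \in P p.1)
                   (val (val b).1, lift (val b).1 (val b).2) (lift_in (valP b)))
  end.

Lemma e0_adj p q : sub2_adj e (e0 p) (e0 q) = sub2_adj ew p q.
Proof.
case: p => [[x|x]|[[a1 a2] ha]]; case: q => [[y|y]|[[b1 b2] hb]] //=;
  rewrite ?val_eqE //.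
by rewrite (mem_lift _ ha) (mem_lift _ hb).
Qed.

Lemma e0_stat p : s2stat (e0 p) = s2stat p.
Proof. by case: p => [[x|x]|b]. Qed.

Lemma e0_inj : injective e0.
Proof.
case=> [[x|x]|[[a1 a2] ha]]; case=> [[y|y]|[[b1 b2] hb]] //=.
- by move=> [] /val_inj ->.
- by move=> [] /val_inj ->.
- move=> [] /val_inj h1; subst b1 => h2.
  have h : a2 = b2 by move: (lift_pre ha) (lift_pre hb); rewrite /= h2 => h3 h4; rewrite -h3 h4.
  subst b2; congr inr; exact: val_inj.
Qed.

Lemma e0_ww p : sub2_adj e (e0 p) (inl (inl w)) = false.
Proof.
case: p => [[x|x]|[[a1 a2] ha]] //=; apply/negbTE; rewrite eq_sym; [exact: (valP x) | exact: (valP a1)].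
Qed.

Lemma e0_w1 p : sub2_adj e (e0 p) (inl (inr w)) = false.
Proof. case: p => [[x|x]|b] //=; exact/negbTE/(valP x). Qed.

Lemma e0_neq_ww p : e0 p != inl (inl w).
Proof. case: p => [[x|x]|b] //=; apply/eqP => [] [] h; case/negP: (valP x); exact/eqP. Qed.

Lemma e0_neq_w1 p : e0 p != inl (inr w).
Proof. case: p => [[x|x]|b] //=; apply/eqP => [] [] h; case/negP: (valP x); exact/eqP. Qed.

Lemma e0_neq_b p (b : SP) : ((val b).1 == w) || (val b == (v, [set w])) -> e0 p != inr b.
Proof.
case: p => [[x|x]|[[a1 a2] ha]] //= hb; apply/eqP => [] [] /(congr1 val) /= hab.
move: hb; rewrite -hab /= (negbTE (valP a1)) /= xpair_eqE => /andP [_ /eqP].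
by apply/eqP; exact: lift_nw.
Qed.

Let vv : Vw := Sub v vw.

Lemma e0_bv p (b : SP) : val b = (v, [set w]) -> sub2_adj e (e0 p) (inr b) = (p == inl (inl vv)).
Proof.
case: b => [[b1 b2] hb] /= [h1 h2]; subst b1 b2.
case: p => [[x|x]|[[a1 a2] ha]] //=.
- have /negbTE h := valP a1; by rewrite in_set1 h andbF.
Qed.

Lemma e0_bw p (b : SP) : val b = (w, [set v]) -> sub2_adj e (e0 p) (inr b) =
  if p is inr b' then ((val b').1 == vv) && (w \in lift (val b').1 (val b').2) else false.
Proof.
case: b => [[b1 b2] hb] /= [h1 h2]; subst b1 b2.
case: p => [[x|x]|[[a1 a2] ha]] //=.
- exact/negbTE/(valP x).
- rewrite in_set1 -val_eqE /= esy wleaf.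
  by case: (val a1 =P v) => //= _; rewrite andbT.
Qed.

Lemma e0_surj (q : sub2_vert P) :
  [\/ exists p, e0 p = q, q = inl (inl w), q = inl (inr w) |
      exists2 b : SP, q = inr b & (val b == (w, [set v])) || (val b == (v, [set w]))].
Proof.
case: q => [[x|x]|[[b1 b2] hb]].
- case: (x =P w) => [->|/eqP xw]; first by constructor 2.
  by constructor 1; exists (inl (inl (Sub x xw))).
- case: (x =P w) => [->|/eqP xw]; first by constructor 3.
  by constructor 1; exists (inl (inr (Sub x xw))).
- case: (b1 =P w) => [bw|/eqP bw].
    constructor 4; exists (exist _ (b1, b2) hb) => //=.
    subst b1; have hb2 : b2 = [set v] by move: (hb); rewrite Pw_w in_set1 => /eqP.
    by rewrite hb2 eqxx.
  case: (b2 =P [set w]) => [b2w|/eqP b2w].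
    constructor 4; exists (exist _ (b1, b2) hb) => //=; apply/orP; right.
    rewrite b2w xpair_eqE eqxx andbT.
    have : e b1 w by apply: (blk_nbhd hb); rewrite b2w set11.
    by rewrite esy wleaf.
  constructor 1.
  have hb' : preim b2 \in Pw (Sub b1 bw) by apply/memPw; exists b2.
  exists (inr (exist (fun p : Vw * {set Vw} => p.2 \in Pw p.1) (Sub b1 bw, preim b2) hb')) => /=.
  congr inr; apply: val_inj => /=; congr pair.
  exact: liftK.
Qed.

Lemma bw_in : [set v] \in P w.
Proof. by rewrite Pw_w set11. Qed.
Definition bwS : SP := exist (fun p : V * {set V} => p.2 \in P p.1) (w, [set v]) bw_in.

Lemma wvF : (w == v) = false.
Proof. by apply/negbTE; rewrite eq_sym vw. Qed.
Lemma vwF : (v == w) = false.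
Proof. exact/negbTE/vw. Qed.
Lemma ewv : e w v.
Proof. by rewrite wleaf. Qed.
Lemma evw : e v w.
Proof. by rewrite esy wleaf. Qed.

Section Case1.
Hypothesis H1 : [set w] \in P v.
Definition bvS : SP := exist (fun p : V * {set V} => p.2 \in P p.1) (v, [set w]) H1.
Definition nv1 (j : 'I_4) : sub2_vert P :=
  match val j with 0 => inl (inr w) | 1 => inl (inl w) | 2 => inr bwS | _ => inr bvS end.
Definition h1 (s : (sub2_vert Pw + 'I_4)%type) : sub2_vert P :=
  match s with inl p => e0 p | inr j => nv1 j end.

Lemma nv1_adj p (j : 'I_4) : sub2_adj e (e0 p) (nv1 j) = (p == inl (inl vv)) && (j == 3 :> nat).
Proof.
case: j => [[|[|[|[|//]]]] hj]; rewrite /nv1 /=.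
- by rewrite e0_w1 andbF.
- by rewrite e0_ww andbF.
- rewrite (e0_bw _ (b:=bwS)) //; case: p => [[x|x]|[[a1 a2] ha]] //=; rewrite ?andbF //.
  apply/negbTE/negP => /andP [/eqP ha1 wL]; subst a1.
  have := lift_nw ha; rewrite /= -(def_pblock (triv v) H1 (set11 w)).
  by rewrite (def_pblock (triv v) (lift_in ha) wL) eqxx.
- by rewrite andbT (e0_bv _ (b:=bvS)).
Qed.

Lemma case1 : liso (@op2 (S2 ew Pw) (inl (inl vv))) (S2 e P).
Proof.
exists h1; split.
- apply: bij_inj_surj.
  + have nb : forall p j, e0 p != nv1 j.
      move=> p [[|[|[|[|//]]]] hj]; rewrite /nv1 /=.
      * exact: e0_neq_w1.
      * exact: e0_neq_ww.
      * by apply: e0_neq_b; rewrite /= eqxx.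
      * by apply: e0_neq_b; rewrite /= eqxx orbT.
    have nn : injective nv1.
      move=> [[|[|[|[|//]]]] hj] [[|[|[|[|//]]]] hk]; rewrite /nv1 /=;
        try (by move=> _; apply: val_inj); try (by move=> []);
        by move=> [] /eqP; rewrite ?wvF ?vwF.
    move=> [p|j] [q|k] /=.
    * by move/e0_inj ->.
    * by move=> h; have := nb p k; rewrite h eqxx.
    * by move=> h; have := nb q j; rewrite h eqxx.
    * by move/nn ->.
  + move=> q; case: (e0_surj q) => [[p <-]|->|->|[b -> hb]].
    * by exists (inl p).
    * by exists (inr (Ordinal (isT : 1 < 4))).
    * by exists (inr (Ordinal (isT : 0 < 4))).
    * case/orP: hb => /eqP hb.
        exists (inr (Ordinal (isT : 2 < 4))); congr inr; exact: val_inj.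
      exists (inr (Ordinal (isT : 3 < 4))); congr inr; exact: val_inj.
- move=> [p|j] [q|k] /=.
  + exact: e0_adj.
  + exact: nv1_adj.
  + by rewrite sub2_adj_sym // nv1_adj.
  + case: j => [[|[|[|[|//]]]] hj]; case: k => [[|[|[|[|//]]]] hk] //=;
      by rewrite ?eqxx ?wvF ?vwF ?eirr ?ewv ?evw ?in_set1 ?eqxx.
- move=> [p|[[|[|[|[|//]]]] hj]] //=; exact: e0_stat.
Qed.
End Case1.

Section Case2.
Variable Aw : {set V}.
Hypotheses (hAw : Aw \in P v) (wAw : w \in Aw) (nAw : Aw != [set w]).
Lemma hz : preim Aw \in Pw vv.
Proof. by apply/memPw; exists Aw. Qed.
Definition bz : {p : Vw * {set Vw} | p.2 \in Pw p.1} :=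
  exist (fun p : Vw * {set Vw} => p.2 \in Pw p.1) (vv, preim Aw) hz.
Definition nv2 (j : 'I_3) : sub2_vert P :=
  match val j with 0 => inr bwS | 1 => inl (inl w) | _ => inl (inr w) end.
Definition h2 (s : (sub2_vert Pw + 'I_3)%type) : sub2_vert P :=
  match s with inl p => e0 p | inr j => nv2 j end.

Lemma nv2_adj p (j : 'I_3) : sub2_adj e (e0 p) (nv2 j) = (p == inr bz) && (j == 0 :> nat).
Proof.
case: j => [[|[|[|//]]] hj]; rewrite /nv2 /=.
- rewrite andbT (e0_bw _ (b:=bwS)) //; case: p => [[x|x]|[[a1 a2] ha]] //=.
  apply/idP/idP.
    move=> /andP [/eqP ha1 wL]; subst a1.
    have e1 : lift vv a2 = Aw.
      by rewrite -(def_pblock (triv v) hAw wAw) (def_pblock (triv v) (lift_in ha) wL).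
    apply/eqP; congr inr; apply: val_inj => /=; congr pair.
    by rewrite -e1 (lift_pre ha).
  move=> /eqP [] -> h2e; rewrite eqxx /=; subst a2.
  by rewrite liftK.
- by rewrite e0_ww andbF.
- by rewrite e0_w1 andbF.
Qed.

Lemma case2 : liso (@op1 (S2 ew Pw) (inr bz)) (S2 e P).
Proof.
exists h2; split.
- apply: bij_inj_surj.
  + have nb : forall p j, e0 p != nv2 j.
      move=> p [[|[|[|//]]] hj]; rewrite /nv2 /=.
      * by apply: e0_neq_b; rewrite /= eqxx.
      * exact: e0_neq_ww.
      * exact: e0_neq_w1.
    have nn : injective nv2.
      move=> [[|[|[|//]]] hj] [[|[|[|//]]] hk]; rewrite /nv2 /=;
        try (by move=> _; apply: val_inj); try (by move=> []);
        by move=> [] /eqP; rewrite ?wvF ?vwF.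
    move=> [p|j] [q|k] /=.
    * by move/e0_inj ->.
    * by move=> h; have := nb p k; rewrite h eqxx.
    * by move=> h; have := nb q j; rewrite h eqxx.
    * by move/nn ->.
  + move=> q; case: (e0_surj q) => [[p <-]|->|->|[b -> hb]].
    * by exists (inl p).
    * by exists (inr (Ordinal (isT : 1 < 3))).
    * by exists (inr (Ordinal (isT : 2 < 3))).
    * case/orP: hb => /eqP hb.
        exists (inr (Ordinal (isT : 0 < 3))); congr inr; exact: val_inj.
      exfalso; move/negP: nAw; apply; apply/eqP.
      have hb' := valP b; rewrite hb /= in hb'.
      by rewrite -(def_pblock (triv v) hAw wAw) (def_pblock (triv v) hb' (set11 w)).
- move=> [p|j] [q|k] /=.
  + exact: e0_adj.
  + exact: nv2_adj.
  + by rewrite sub2_adj_sym // nv2_adj.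
  + case: j => [[|[|[|//]]] hj]; case: k => [[|[|[|//]]] hk] //=;
      by rewrite ?eqxx ?wvF ?vwF ?eirr ?ewv ?evw ?in_set1 ?eqxx.
- move=> [p|[[|[|[|//]]] hj]] //=; exact: e0_stat.
Qed.
End Case2.

Lemma step : (exists G, inO G /\ liso G (S2 ew Pw)) -> exists G, inO G /\ liso G (S2 e P).
Proof.
move=> [G [GO [f [fb fa fs]]]].
have [g fgK gfK] := fb.
have fP : [/\ bijective f, (forall x y, ladj (f x) (f y) = ladj x y) & (forall x, lstat (f x) = lstat x)].
  by split.
case: (boolP ([set w] \in P v)) => [H1|H1].
- pose x := g (inl (inl vv)); pose y := g (inl (inr vv)).
  exists (op2 x); split.
    apply: (@inO_op2 G x y) => //.
    + by rewrite -fa /x /y !gfK /= eqxx.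
    + by rewrite -fs /x gfK.
    + by rewrite -fs /y gfK.
  apply: liso_trans (liso_op2 x fP) _.
  by rewrite /x gfK; exact: case1.
- have wc : w \in cover (P v) by case/and3P: (Ppart v) => /eqP -> _ _; rewrite inE evw.
  set Aw := pblock (P v) w.
  have hAw : Aw \in P v := pblock_mem wc.
  have wAw : w \in Aw by rewrite mem_pblock.
  have nAw : Aw != [set w] by apply: contraNneq H1 => <-.
  pose x := g (inl (inr vv)); pose y := g (inl (inl vv)); pose z := g (inr (bz hAw nAw)).
  exists (op1 z); split.
    apply: (@inO_op1 G x y z) => //.
    + by rewrite -fa /x /y !gfK /= eqxx.
    + by rewrite -fa /y /z !gfK /= eqxx.
    + by rewrite -fs /x gfK.
    + by rewrite -fs /y gfK.
    + by rewrite -fs /z gfK.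
  apply: liso_trans (liso_op1 z fP) _.
  by rewrite /z gfK; exact: case2.
Qed.
End Step.

Lemma leaf_from (V : finType) (e : rel V) :
  symmetric e -> irreflexive e -> acyclic e ->
  forall n x s, uniq (x :: s) -> path e x s -> s != [::] -> #|V| - size s <= n ->
  exists w v, forall y, e w y = (y == v).
Proof.
move=> esy eirr eac; elim=> [|n IH] x s us ps s0 hn.
  have h1 : #|x :: s| <= #|V| := max_card _.
  move: h1; rewrite (card_uniqP us) => h; exfalso; move: h hn; rewrite [size (x :: s)]/=; set m := size s; set k := #|V|; lia.
case: (boolP [exists y, e x y && (y \notin x :: s)]) => [/existsP [y /andP [exy ny]]|].
  apply: (IH y (x :: s)).
  - by rewrite cons_uniq ny.
  - by rewrite /= esy exy.
  - by [].
  - rewrite /=; move: hn; set m := size s; set k := #|V|; lia.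
rewrite negb_exists => /forallP hall.
case: s us ps s0 hn {hall} (hall) => [//|z s] us ps _ _ hall.
exists x, z => y; apply/idP/eqP => [exy|->]; last by case/andP: ps.
have := hall y; rewrite exy /= negbK in_cons => /orP [/eqP yx|ys].
  by move: exy; rewrite yx eirr.
move: ys; rewrite in_cons => /orP [/eqP //|ys]; exfalso.
case/splitPr: ys us ps => s1 s2 us ps.
have := eac (x :: z :: rcons s1 y).
have -> : uniq (x :: z :: rcons s1 y).
  apply: subseq_uniq us; rewrite /= !eqxx -cats1.
  by apply: cat_subseq; rewrite ?subseq_refl //= eqxx sub0seq.
move=> /(_ isT); rewrite /= size_rcons => /(_ isT); apply/negP/negPn.
move: ps; rewrite /= cat_path /= => /and3P [exz p1 /andP [e1 _]].
by rewrite exz !rcons_path p1 e1 last_rcons esy.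
Qed.

Lemma base (V : finType) (e : rel V) (P : V -> {set {set V}}) :
  #|V| = 2 -> is_tree e -> (forall v, partition (P v) (nbhd e v)) ->
  exists G, inO G /\ liso G (S2 e P).
Proof.
move=> hV [esy [eirr [econn _]]] hP.
have : 1 < #|V| by rewrite hV.
case/card_gt1P => u [v [_ _ uv]].
have uvF : (u == v) = false by exact/negbTE.
have vuF : (v == u) = false by rewrite eq_sym.
have huv : forall x, (x == u) || (x == v).
  move=> x; have : x \in [set u; v]; last by rewrite !inE.
  have -> : [set u; v] = [set: V]; last by rewrite inE.
  apply/eqP; rewrite eqEcard subsetT cardsT cards2 uv hV //.
have euv : e u v.
  case/connectP: (econn u v) => [[|z p]] /=; first by move=> _ h; rewrite h eqxx in uvF.
  case/andP => euz _ _; case/orP: (huv z) => /eqP hz; last by rewrite -hz.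
  by rewrite hz eirr in euz.
have evu : e v u by rewrite esy.
have Pu : P u = [set [set v]].
  apply: part1; have -> : [set v] = nbhd e u; last exact: hP.
  apply/setP => y; rewrite !inE; case/orP: (huv y) => /eqP ->; by rewrite ?eqxx ?eirr ?uvF ?vuF.
have Pv : P v = [set [set u]].
  apply: part1; have -> : [set u] = nbhd e v; last exact: hP.
  apply/setP => y; rewrite !inE; case/orP: (huv y) => /eqP ->; by rewrite ?eqxx ?eirr ?uvF ?vuF.
have bu_in : [set v] \in P u by rewrite Pu set11.
have bv_in : [set u] \in P v by rewrite Pv set11.
pose bu := exist (fun p : V * {set V} => p.2 \in P p.1) (u, [set v]) bu_in.
pose bv := exist (fun p : V * {set V} => p.2 \in P p.1) (v, [set u]) bv_in.
pose g (i : 'I_6) : sub2_vert P :=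
  match val i with
  | 0 => inl (inr u) | 1 => inl (inl u) | 2 => inr bu | 3 => inr bv
  | 4 => inl (inl v) | _ => inl (inr v) end.
exists P6L; split; first exact: inO_P6.
exists g; split.
- apply: bij_inj_surj.
  + move=> [[|[|[|[|[|[|//]]]]]] hj] [[|[|[|[|[|[|//]]]]]] hk]; rewrite /g /=;
      try (by move=> _; apply: val_inj); try (by move=> []);
      by move=> [] /eqP; rewrite ?uvF ?vuF.
  + case=> [[x|x]|[[b1 b2] hb]].
    * case/orP: (huv x) => /eqP ->.
        by exists (Ordinal (isT : 1 < 6)).
      by exists (Ordinal (isT : 4 < 6)).
    * case/orP: (huv x) => /eqP ->.
        by exists (Ordinal (isT : 0 < 6)).
      by exists (Ordinal (isT : 5 < 6)).
    * case/orP: (huv b1) => /eqP hb1; subst b1.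
        have hb2 : b2 = [set v] by move: (hb); rewrite Pu in_set1 => /eqP.
        subst b2; exists (Ordinal (isT : 2 < 6)); congr inr; exact: val_inj.
      have hb2 : b2 = [set u] by move: (hb); rewrite Pv in_set1 => /eqP.
      subst b2; exists (Ordinal (isT : 3 < 6)); congr inr; exact: val_inj.
- move=> [[|[|[|[|[|[|//]]]]]] hj] [[|[|[|[|[|[|//]]]]]] hk]; rewrite /g /=;
    by rewrite ?eqxx ?uvF ?vuF ?eirr ?euv ?evu ?in_set1 ?eqxx.
- by move=> [[|[|[|[|[|[|//]]]]]] hj].
Qed.

Lemma tree_leaf (V : finType) (e : rel V) :
  is_tree e -> 1 < #|V| -> exists w v, forall y, e w y = (y == v).
Proof.
move=> [esy [eirr [econn eac]]] V2.
case/card_gt1P: V2 => x [y [_ _ xy]].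
case/connectP: (econn x y) => [[|z p]] /=; first by move=> _ h; rewrite h eqxx in xy.
case/andP => exz _ _.
apply: (leaf_from esy eirr eac (n := #|V|) (x := x) (s := [:: z])) => //=.
- rewrite inE andbT; apply: contraTneq exz => ->; by rewrite eirr.
- by rewrite exz.
- by rewrite leq_subr.
Qed.

Lemma main_ind n : forall (V : finType) (e : rel V) (P : V -> {set {set V}}),
  #|V| = n.+2 -> is_tree e -> (forall v, partition (P v) (nbhd e v)) ->
  exists G, inO G /\ liso G (S2 e P).
Proof.
elim: n => [|n IH] V e P hV ht hP; first exact: base.
have [esy [eirr _]] := ht.
have [w [v wl]] := tree_leaf ht (ltac:(by rewrite hV)).
apply: (step esy eirr hP wl); apply: IH.
- by rewrite card_Vw hV.
- exact: ew_tree.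
- exact: Pw_part.
Qed.

Lemma part1_main (H : finType) (eH : rel H) : in_O' eH -> in_O eH.
Proof.
move=> [V [e [P [ht V2 hP [g [gb ga]]]]]].
have hV : #|V| = (#|V| - 2).+2 by lia.
have [G [GO [f [fb fa fs]]]] := main_ind hV ht hP.
exists G; split => //; exists (g \o f); split.
- exact: bij_comp.
- by move=> x y /=; rewrite ga; exact: fa.
Qed.

Lemma lt_f10 (i : 'I_6) : i + 4 < 10.
Proof. by rewrite (ltn_add2r 4 i 6). Qed.
Lemma lt_f10' (j : 'I_4) : j < 10.
Proof. exact: leq_trans (ltn_ord j) _. Qed.
Definition f10 (p : ('I_6 + 'I_4)%type) : 'I_10 :=
  match p with inl i => Ordinal (lt_f10 i) | inr j => Ordinal (lt_f10' j) end.
Definition o6 k (h : k < 6) : 'I_6 := Ordinal h.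
Definition o4 k (h : k < 4) : 'I_4 := Ordinal h.
Definition g10 (k : 'I_10) : ('I_6 + 'I_4)%type :=
  nth (inl (@o6 0 isT))
   [:: inr (@o4 0 isT); inr (@o4 1 isT); inr (@o4 2 isT);
       inr (@o4 3 isT);
       inl (@o6 0 isT); inl (@o6 1 isT); inl (@o6 2 isT);
       inl (@o6 3 isT); inl (@o6 4 isT); inl (@o6 5 isT)] k.

Lemma P10_in_O : in_O (@path_adj 10).
Proof.
exists (@op2 P6L (ord0 : 'I_6)); split.
  by apply: (@inO_op2 P6L ord0 (@o6 1 isT) inO_P6).
exists f10; split.
  exists g10.
    by move=> [[[|[|[|[|[|[|//]]]]]] ?]|[[|[|[|[|//]]]] ?]]; apply/eqP.
  by move=> [[|[|[|[|[|[|[|[|[|[|//]]]]]]]]]] ?]; apply/eqP.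
move=> [[[|[|[|[|[|[|//]]]]]] ?]|[[|[|[|[|//]]]] ?]];
  move=> [[[|[|[|[|[|[|//]]]]]] ?]|[[|[|[|[|//]]]] ?]]; by [].
Qed.

Lemma deg_iso {T1 T2 : finType} (e1 : rel T1) (e2 : rel T2) (f : T1 -> T2) :
  bijective f -> (forall x y, e2 (f x) (f y) = e1 x y) ->
  forall x, #|[set y | e2 (f x) y]| = #|[set y | e1 x y]|.
Proof.
move=> [g fgK gfK] fe x.
have finj : injective f by exact: can_inj fgK.
rewrite -(card_imset _ finj); apply: eq_card => k.
by rewrite -[k]gfK mem_imset // !inE fe.
Qed.

Lemma P10_deg (k : 'I_10) : 0 < k < 9 -> 1 < #|[set j | path_adj k j]|.
Proof.
case/andP=> k0 k9.
have ha : k.-1 < 10 by apply: leq_ltn_trans (ltn_ord k); exact: leq_pred.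
have hb : k.+1 < 10 by [].
apply/card_gt1P; exists (Ordinal ha), (Ordinal hb); rewrite !inE /path_adj /=.
rewrite prednK // eqxx orbT /= eqxx; split=> //.
by apply/negP => /eqP [] ; lia.
Qed.

Lemma P10_not_in_O' : ~ in_O' (@path_adj 10).
Proof.
move=> [V [e [P [[esy [eirr [econn eac]]] V2 Ppart [f [fbij fadj]]]]]].
have deg1 : forall v : V, #|[set k | path_adj (f (inl (inr v))) k]| = 1.
  move=> v; rewrite (deg_iso fbij fadj).
  have -> : [set y | @sub2_adj V e P (inl (inr v)) y] = [set inl (inl v)].
    apply/setP => [[[x|x]|b]]; rewrite !inE //=.
  by rewrite cards1.
have end09 : forall v : V, (f (inl (inr v)) == 0 :> nat) || (f (inl (inr v)) == 9 :> nat).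
  move=> v; set k := f _.
  case: (posnP k) => [->|k0] //; case: (ltnP k 9) => [k9|k9].
    by have := @P10_deg k; rewrite k0 k9 deg1 => /(_ isT).
  by have := ltn_ord k; rewrite ltnS => k9'; rewrite eqn_leq k9 k9' orbT.
have finj : injective f by case: fbij => g /can_inj.
have V2' : #|V| <= 2.
  rewrite -card_bool; apply: (@leq_card _ _ (fun v => f (inl (inr v)) == 0 :> nat)).
  move=> u v /= huv.
  have : f (inl (inr u)) = f (inl (inr v)).
    apply: ord_inj; move: (end09 u) (end09 v) huv.
    by case/orP=> /eqP -> /orP [] /eqP ->.
  by move/finj => [].
have P1 : forall v (A B : {set V}), A \in P v -> B \in P v -> A = B.
  move=> v A B hA hB.
  have := Ppart v; case/and3P => /eqP cov triv s0.
  have nA : A != set0 by apply: contraNneq s0 => <-.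
  have nB : B != set0 by apply: contraNneq s0 => <-.
  case/set0Pn: nA => a aA; case/set0Pn: nB => b bB.
  have an : a \in nbhd e v by rewrite -cov; apply/bigcupP; exists A.
  have bn : b \in nbhd e v by rewrite -cov; apply/bigcupP; exists B.
  have ab : a = b.
    have : #|nbhd e v| <= 1.
      have : nbhd e v \subset [set~ v].
        by apply/subsetP => x; rewrite !inE => exv; apply: contraTneq exv => ->; rewrite eirr.
      move/subset_leq_card; rewrite cardsC1; move=> h; apply: leq_trans h _.
      by rewrite -subn1 leq_subLR.
    by move/card_le1P => /(_ a an b); rewrite bn => /esym/eqP.
  by rewrite -(def_pblock triv hA aA) (def_pblock triv hB) // ab.
have := bij_eq_card fbij; rewrite card_ord !card_sum card_sig.
set S := [pred _ | _].
have : #|S| <= #|V|.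
  apply: (@leq_card_in _ _ (fun p : V * {set V} => p.1)) => [[u A] [u' B]].
  rewrite !inE /= => hA hB eu; subst u'.
  by rewrite (P1 u A B hA hB).
move=> hS hc.
have : 10 <= 6 by rewrite -hc; apply: leq_trans (leq_add (leq_add V2' V2') (leq_trans hS V2')) _.
by [].
Qed.


Theorem mainTheorem4 :
  (forall (H : finType) (eH : rel H), in_O' eH -> in_O eH) /\
  in_O (@path_adj 10) /\ ~ in_O' (@path_adj 10).
Proof.
split; first exact: part1_main.
split; [exact: P10_in_O | exact: P10_not_in_O'].
Qed.
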